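(* Let $k\ge2$ and let $G,H$ be connected graphs that are not $2$-connected. For vertices $v\in V(G_\perp)$ and $w\in V(H)\setminus V(H_\perp)$ we have $\chi^k_G(v)\ne\chi^k_H(w)$.
   Context: Graphs are finite, simple, undirected (possibly colored). A graph is $2$-connected if it has more than $2$ vertices and removing any one vertex leaves it connected. A separator of $G$ is a set $S$ with $G-S$ disconnected. $P(G)$ is the set of pairs $(S,K)$ with $S$ a separator of minimum cardinality and $K$ the vertex set of a connected component of $G-S$, partially ordered by $(S,K)\le(S',K')$ iff $K\subseteq K'$; $P_0(G)$ is the set of minimal elements; $V(G_\perp):=V(G)\setminus\bigcup_{(S,K)\in P_0(G)}K$. For $k\ge2$, the $k$-dimensional Weisfeiler–Leman algorithm computes a coloring of $V(G)^k$: the initial color of a tuple consists of its input color and the isomorphism type of the ordered induced subgraph on its entries; in each round the new color of $\bar v$ is the pair of its old color and the multiset, over $w\in V(G)$, of the $k$-tuples whose $i$-th component is the old color of $\bar v$ with its $i$-th entry replaced by $w$; the stable coloring is $\chi^k_G$, with canonical colors comparable across graphs. $\chi^k_G(v):=\chi^k_G(v,\dots,v)$. *)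

(* Defs.v *)
From mathcomp Require Import all_boot.
Set Implicit Arguments.
Unset Strict Implicit.
Unset Printing Implicit Defensive.

Record cgraph (C : Type) := CGraph {
  vert : finType;
  adj : rel vert;
  adj_sym : symmetric adj;
  adj_irrefl : irreflexive adj;
  vcolor : vert -> C }.

Section Graphs.
Variables (C : Type) (G : cgraph C).
Local Notation V := (vert G).

Definition conn_in (A : {set V}) (x y : V) : bool :=
  connect [rel a b | adj a b && (a \in A) && (b \in A)] x y.

Definition connected_graph : Prop :=
  0 < #|V| /\ forall x y : V, conn_in setT x y.

Definition two_connected : Prop :=
  2 < #|V| /\
  forall x : V, forall y z : V, y != x -> z != x -> conn_in (~: [set x]) y z.

Definition separator (S : {set V}) : Prop :=
  exists x y : V, [/\ x \notin S, y \notin S & ~~ conn_in (~: S) x y].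

Definition min_separator (S : {set V}) : Prop :=
  separator S /\ forall S' : {set V}, separator S' -> #|S| <= #|S'|.

Definition component_of (S K : {set V}) : Prop :=
  exists2 x : V, x \notin S & K = [set y | (y \notin S) && conn_in (~: S) x y].

Definition inP (S K : {set V}) : Prop := min_separator S /\ component_of S K.

Definition inP0 (S K : {set V}) : Prop :=
  inP S K /\ forall S' K', inP S' K' -> K' \subset K -> K \subset K'.

Definition in_perp (v : V) : Prop := forall S K, inP0 S K -> v \notin K.

End Graphs.

Definition tupd (T : Type) (k : nat) (t : 'I_k -> T) (i : 'I_k) (x : T) : 'I_k -> T :=
  fun j => if j == i then x else t j.

Definition wl_init_same (C : Type) (k : nat) (G H : cgraph C)
    (t : 'I_k -> vert G) (u : 'I_k -> vert H) : Prop :=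
  forall i j : 'I_k,
    [/\ vcolor (t i) = vcolor (u i),
        (t i == t j) = (u i == u j)
      & adj (t i) (t j) = adj (u i) (u j)].

(* wl_same k G H r t u : the k-tuples t of G and u of H receive the same
   (canonical) color after r refinement rounds.  Equality of the multisets
   over w of the k-tuples of old colors is expressed by a bijection
   f : V(G) -> V(H) matching w with f w. *)
Fixpoint wl_same (C : Type) (k : nat) (G H : cgraph C) (r : nat)
    (t : 'I_k -> vert G) (u : 'I_k -> vert H) : Prop :=
  match r with
  | 0 => wl_init_same t u
  | r'.+1 =>
      wl_same r' t u /\
      exists f : vert G -> vert H,
        bijective f /\
        forall (w : vert G) (i : 'I_k),
          wl_same r' (tupd t i w) (tupd u i (f w))
  end.

(* chi^k_G(v) = chi^k_H(w) for the stable canonical colorings: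
   the diagonal tuples agree at every round *)
Definition wl_color_eq (C : Type) (k : nat) (G H : cgraph C)
    (v : vert G) (w : vert H) : Prop :=
  forall r : nat, wl_same r (fun _ : 'I_k => v) (fun _ : 'I_k => w).
Arguments wl_color_eq {C} k G H v w.

(* Main.v *)
Require Import Defs.
From mathcomp Require Import all_boot.
From Stdlib Require Import Classical.
Set Implicit Arguments. Unset Strict Implicit. Unset Printing Implicit Defensive.

Section Walks.
Variables (C : Type) (G : cgraph C).
Local Notation V := (vert G).

Fixpoint W (n : nat) (x y : V) : nat :=
  if n is n'.+1 then \sum_(z : V) adj x z * W n' z y else (x == y : nat).
Fixpoint F (s : V) (n : nat) (x : V) : nat :=
  if n is n'.+1 then (x != s) * \sum_(z : V) adj x z * F s n' z else (x == s : nat).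
Fixpoint WA (s : V) (n : nat) (x y : V) : nat :=
  if n is n'.+1 then (x != s) * \sum_(z : V) adj x z * WA s n' z y
  else ((x == y) && (x != s) : nat).

Lemma W_Sr n x y : W n.+1 x y = \sum_(z : V) W n x z * adj z y.
Proof.
elim: n x => [|n IH] x.
  rewrite /= (bigD1 y) //= eqxx muln1 big1 ?addn0; last first.
    by move=> z /negbTE ->; rewrite muln0.
  rewrite (bigD1 x) //= eqxx mul1n big1 ?addn0 //.
  by move=> z; rewrite eq_sym => /negbTE ->.
transitivity (\sum_(z : V) adj x z * W n.+1 z y); first by [].
under eq_bigr => z _ do rewrite IH big_distrr /=.
rewrite exchange_big /=; apply: eq_bigr => u _.
rewrite big_distrl; apply: eq_bigr => z _; by rewrite mulnA.
Qed.

Lemma W_sym n x y : W n x y = W n y x.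
Proof.
elim: n x y => [|n IH] x y; first by rewrite /= eq_sym.
rewrite [RHS]W_Sr /=; apply: eq_bigr => z _.
by rewrite IH mulnC (adj_sym (c:=G)).
Qed.

Lemma WA_end s n x : WA s n x s = 0.
Proof.
elim: n x => [|n IH] x /=; first by case: eqP => // ->; rewrite eqxx.
by rewrite big1 ?muln0 // => z _; rewrite IH muln0.
Qed.

Lemma W_decomp s n x y :
  W n x y = WA s n x y + \sum_(i < n.+1) F s i x * W (n - i) s y.
Proof.
elim: n x => [|n IH] x.
  rewrite big_ord_recl big_ord0 /= addn0.
  by case: (eqVneq x s) => [->|nxs] /=; rewrite ?eqxx ?andbF ?mul1n ?andbT ?mul0n ?addn0.
case: (eqVneq x s) => [->|nxs].
  rewrite [WA _ _ _ _]/= eqxx mul0n add0n big_ord_recl [F _ 0 _]/= eqxx mul1n subn0 big1 ?addn0 //.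
  by move=> i _; rewrite /= eqxx mul0n.
rewrite big_ord_recl [F _ 0 _]/= (negbTE nxs) mul0n add0n [WA _ _ _ _]/= nxs mul1n.
transitivity (\sum_(z : V) adj x z * W n z y); first by [].
under eq_bigr => z _ do rewrite IH mulnDr big_distrr /=.
rewrite big_split /=; congr (_ + _).
rewrite exchange_big /=; apply: eq_bigr => i _.
rewrite /bump /= nxs mul1n add0n add1n subSS big_distrl /=; apply: eq_bigr => z _.
by rewrite mulnA.
Qed.

Lemma WA_pos_neq s n x y : 0 < WA s n x y -> x != s.
Proof. by case: n => [|n] /=; [case: (x != s); rewrite ?andbF|case: (x != s)]. Qed.

Lemma WA_conn s n x y : 0 < WA s n x y -> conn_in (~: [set s]) x y.
Proof.
elim: n x => [|n IH] x.
  by rewrite /=; case: (eqVneq x y) => [-> _|] /=; [exact: connect0|].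
move=> hpos; have nxs : x != s by apply: (WA_pos_neq hpos).
move: hpos; rewrite [WA _ _ _ _]/= nxs mul1n => hpos.
have [z hz]: exists z, 0 < adj x z * WA s n z y.
  apply/existsP; apply: contraLR hpos; rewrite negb_exists => /forallP h.
  by rewrite -leqNgt leqn0 sum_nat_eq0; apply/forallP => z; rewrite -leqn0 leqNgt h.
move: hz; rewrite muln_gt0 => /andP [hadj hwa].
have hadj' : adj x z by move: hadj; case: (adj x z).
apply: connect_trans (IH _ hwa); apply: connect1 => /=.
rewrite hadj' !inE nxs /=; exact: (WA_pos_neq hwa).
Qed.

Lemma conn_WA s x y : x != s -> conn_in (~: [set s]) x y -> exists n, 0 < WA s n x y.
Proof.
move=> nxs /connectP [p hp ->] {y}.
elim: p x nxs hp => [|z p IH] x nxs /=.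
  by move=> _; exists 0; rewrite /= eqxx nxs.
case/andP => /andP [/andP [hadj hx] hz] hp.
have nzs : z != s by move: hz; rewrite !inE.
have [n hn] := IH z nzs hp.
exists n.+1 => /=; rewrite nxs mul1n (bigD1 z) //= hadj mul1n.
exact: leq_trans hn (leq_addr _ _).
Qed.

End Walks.

Lemma W_xs (C : Type) (G : cgraph C) s n (x : vert G) :
  W n x s = \sum_(i < n) F s i x * W (n - i) s s + F s n x.
Proof.
rewrite (W_decomp s) WA_end add0n big_ord_recr /= subnn /= eqxx muln1.
by [].
Qed.

Lemma F_eq (C : Type) (G H : cgraph C) (s x : vert G) (s' x' : vert H) :
  (forall n, W n x s = W n x' s') -> (forall n, W n s s = W n s' s') ->
  forall n, F s n x = F s' n x'.
Proof.
move=> h1 h2; elim/ltn_ind => n IH.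
have := h1 n; rewrite !W_xs.
suff -> : \sum_(i < n) F s i x * W (n - i) s s = \sum_(i < n) F s' i x' * W (n - i) s' s'.
  by move/addnI.
by apply: eq_bigr => i _; rewrite IH // h2.
Qed.

Lemma WA_eq (C : Type) (G H : cgraph C) (s x y : vert G) (s' x' y' : vert H) :
  (forall n, W n x y = W n x' y') ->
  (forall n, W n x s = W n x' s') -> (forall n, W n s s = W n s' s') ->
  (forall n, W n s y = W n s' y') ->
  forall n, WA s n x y = WA s' n x' y'.
Proof.
move=> h0 h1 h2 h3 n.
have := h0 n; rewrite (W_decomp s) (W_decomp s').
suff -> : \sum_(i < n.+1) F s i x * W (n - i) s y = \sum_(i < n.+1) F s' i x' * W (n - i) s' y'.
  by move/addIn.
by apply: eq_bigr => i _; rewrite (F_eq h1 h2) h3.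
Qed.

Lemma conn_eq (C : Type) (G H : cgraph C) (s x y : vert G) (s' x' y' : vert H) :
  x != s -> x' != s' ->
  (forall n, W n x y = W n x' y') ->
  (forall n, W n x s = W n x' s') -> (forall n, W n s s = W n s' s') ->
  (forall n, W n s y = W n s' y') ->
  conn_in (~: [set s]) x y = conn_in (~: [set s']) x' y'.
Proof.
move=> nx nx' h0 h1 h2 h3; have hWA := WA_eq h0 h1 h2 h3.
apply/idP/idP.
  by case/(conn_WA nx) => n; rewrite hWA => /WA_conn.
by case/(conn_WA nx') => n; rewrite -hWA => /WA_conn.
Qed.

Definition Rel (C : Type) (k : nat) (G H : cgraph C) (t : 'I_k -> vert G) (u : 'I_k -> vert H) :=
  forall r, wl_same r t u.

Lemma wl_same_mono (C : Type) (k : nat) (G H : cgraph C) r r' (t : 'I_k -> vert G) (u : 'I_k -> vert H) :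
  r <= r' -> wl_same r' t u -> wl_same r t u.
Proof.
elim: r' r => [|r' IH] r; first by rewrite leqn0 => /eqP ->.
rewrite leq_eqVlt => /orP [/eqP -> //|hlt] [h _].
exact: IH.
Qed.

Lemma wl_same_sym (C : Type) (k : nat) (G H : cgraph C) r (t : 'I_k -> vert G) (u : 'I_k -> vert H) :
  wl_same r t u -> wl_same r u t.
Proof.
elim: r t u => [|r IH] t u /=.
  by move=> h i j; have [h1 h2 h3] := h i j.
case=> h0 [f [fbij hf]]; split; first exact: IH.
case: (fbij) => g fg gf.
exists g; split; first by exists f.
move=> w i; apply: IH; have := hf (g w) i; by rewrite gf.
Qed.

Lemma Rel_sym (C : Type) (k : nat) (G H : cgraph C) (t : 'I_k -> vert G) (u : 'I_k -> vert H) :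
  Rel t u -> Rel u t.
Proof. by move=> h r; apply: wl_same_sym. Qed.

Lemma Rel_init (C : Type) (k : nat) (G H : cgraph C) (t : 'I_k -> vert G) (u : 'I_k -> vert H) :
  Rel t u -> wl_init_same t u.
Proof. by move=> h; apply: (h 0). Qed.

Lemma GL (C : Type) (k : nat) (G H : cgraph C) (t : 'I_k -> vert G) (u : 'I_k -> vert H) :
  Rel t u -> exists f : vert G -> vert H, bijective f /\
    forall z i, Rel (tupd t i z) (tupd u i (f z)).
Proof.
move=> hR.
pose P r (f : {ffun vert G -> vert H}) :=
  bijective f /\ forall z i, wl_same r (tupd t i z) (tupd u i (f z)).
have Pmono : forall r r' f, r <= r' -> P r' f -> P r f.
  move=> r r' f hrr [hb hf]; split => // z i; exact: wl_same_mono hrr (hf z i).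
have Pex : forall r, exists f, P r f.
  move=> r; have /= [_ [f [fb hf]]] := hR r.+1.
  exists (finfun f); split.
    by apply: (eq_bij fb) => x; rewrite ffunE.
  by move=> z i; rewrite ffunE.
have [f hf] : exists f, forall r, P r f.
  apply: NNPP => hne.
  have hall : forall f, exists r, ~ P r f.
    move=> f; apply: NNPP => h1; apply: hne; exists f => r.
    by apply: NNPP => h2; apply: h1; exists r.
  have hl : forall l : seq {ffun vert G -> vert H}, exists R, forall f, f \in l -> ~ P R f.
    elim => [|g l [R1 IH]]; first by exists 0.
    have [r2 hr2] := hall g.
    exists (maxn R1 r2) => f; rewrite inE => /orP [/eqP ->|hfl] hP.
      by apply: hr2; apply: Pmono hP; rewrite leq_maxr.
    by apply: (IH f hfl); apply: Pmono hP; rewrite leq_maxl.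
  have [R hR'] := hl (enum {: {ffun vert G -> vert H}}).
  have [g hg] := Pex R.
  by apply: (hR' g) => //; rewrite mem_enum.
exists (fun x => f x); split; first by case: (hf 0).
by move=> z i r; case: (hf r) => _; apply.
Qed.

Section Tup.
Variables (C : Type) (k : nat) (G H : cgraph C) (i0 i1 : 'I_k).
Hypothesis hi : i0 != i1.

Lemma tupdE1 (T : Type) (t : 'I_k -> T) i x : tupd t i x i = x.
Proof. by rewrite /tupd eqxx. Qed.
Lemma tupdE2 (T : Type) (t : 'I_k -> T) i j x : j != i -> tupd t i x j = t j.
Proof. by rewrite /tupd => /negbTE ->. Qed.

Lemma Rel_init2 (t : 'I_k -> vert G) (u : 'I_k -> vert H) i j : Rel t u ->
  [/\ vcolor (t i) = vcolor (u i), (t i == t j) = (u i == u j)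
      & adj (t i) (t j) = adj (u i) (u j)].
Proof. by move=> h; apply: (Rel_init h). Qed.

Lemma hi' : i1 != i0. Proof. by rewrite eq_sym. Qed.

Ltac tsimp := rewrite ?tupdE1 ?(tupdE2 _ _ hi) ?(tupdE2 _ _ hi') ?tupdE1 ?(tupdE2 _ _ hi) ?(tupdE2 _ _ hi') ?tupdE1 ?(tupdE2 _ _ hi) ?(tupdE2 _ _ hi').

Lemma walks_inv (t : 'I_k -> vert G) (u : 'I_k -> vert H) :
  Rel t u -> forall n, W n (t i0) (t i1) = W n (u i0) (u i1).
Proof.
move=> hR n; elim: n t u hR => [|n IH] t u hR.
  by have [_ h _] := Rel_init2 i0 i1 hR; rewrite /= h.
have [f [fb hf]] := GL hR.
transitivity (\sum_(z : vert G) adj (t i0) z * W n z (t i1)); first by [].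
transitivity (\sum_(z : vert H) adj (u i0) z * W n z (u i1)); last by [].
rewrite [RHS](reindex f) /=; last exact: onW_bij.
apply: eq_bigr => z _; congr (_ * _).
  have [_ _ h] := Rel_init2 i0 i1 (hf z i1).
  by move: h; rewrite !tupdE1 !(tupdE2 _ _ hi) => ->.
by have := IH _ _ (hf z i0); rewrite !tupdE1 !(tupdE2 _ _ hi') => ->.
Qed.

Lemma diag_rel (t : 'I_k -> vert G) (u : 'I_k -> vert H) :
  Rel t u -> Rel (tupd t i1 (t i0)) (tupd u i1 (u i0)).
Proof.
move=> hR; have [f [fb hf]] := GL hR.
have h := hf (t i0) i1.
have [_ he _] := Rel_init2 i0 i1 h.
move: he; rewrite !tupdE1 !(tupdE2 _ _ hi) eqxx => /esym/eqP e.
by rewrite [in tupd u _ (u i0)]e.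
Qed.

Lemma neq_transfer (t : 'I_k -> vert G) (u : 'I_k -> vert H) :
  Rel t u -> (t i0 != t i1) = (u i0 != u i1).
Proof. by move=> hR; have [_ he _] := Rel_init2 i0 i1 hR; rewrite he. Qed.

Lemma sep_transfer (t : 'I_k -> vert G) (u : 'I_k -> vert H) :
  t i1 = t i0 -> u i1 = u i0 -> Rel t u ->
  forall a b, a != t i0 -> b != t i0 -> ~~ conn_in (~: [set t i0]) a b ->
  exists a' b', [/\ a' != u i0, b' != u i0 & ~~ conn_in (~: [set u i0]) a' b'].
Proof.
move=> et eu hR a b na nb hc.
have [f1 [_ hf1]] := GL hR.
have hT2 := hf1 a i0.
have [f2 [_ hf2]] := GL hT2.
have hb1 := hf2 b i1.
have hb0 := hf2 b i0.
have na' : f1 a != u i0.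
  by have := neq_transfer hT2; rewrite !tupdE1 !(tupdE2 _ _ hi') et eu => <-.
have nb' : f2 b != u i0.
  have := neq_transfer hb0; rewrite !tupdE1 !(tupdE2 _ _ hi') et eu => <-.
  exact: nb.
exists (f1 a), (f2 b); split => //.
suff <- : conn_in (~: [set t i0]) a b = conn_in (~: [set u i0]) (f1 a) (f2 b) by [].
apply: conn_eq => //.
- by move=> n; have := walks_inv hb1 n; tsimp.
- by move=> n; have := walks_inv hT2 n; tsimp; rewrite et eu.
- by move=> n; have := walks_inv hR n; rewrite et eu.
- move=> n; have := walks_inv hb0 n; tsimp; rewrite et eu => e.
  by rewrite W_sym e W_sym.
Qed.

Lemma reach_transfer (t : 'I_k -> vert G) (u : 'I_k -> vert H) :
  Rel t u -> t i0 != t i1 ->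
  forall y, y != t i0 -> conn_in (~: [set t i0]) (t i1) y ->
  exists y', Rel (tupd t i0 y) (tupd u i0 y') /\ conn_in (~: [set u i0]) (u i1) y'.
Proof.
move=> hR nt y ny hc.
have [f [_ hf]] := GL hR.
have hA := hf y i1.
have hB := hf y i0.
have hD := diag_rel hR.
exists (f y); split => //.
suff <- : conn_in (~: [set t i0]) (t i1) y = conn_in (~: [set u i0]) (u i1) (f y) by [].
apply: conn_eq.
- by rewrite eq_sym.
- by rewrite eq_sym -(neq_transfer hR).
- move=> n; have := walks_inv hB n.
  by rewrite !tupdE1 !(tupdE2 _ _ hi') W_sym [W n (f y) _]W_sym.
- move=> n; have := walks_inv hR n.
  by rewrite W_sym [W n (u i0) _]W_sym.
- move=> n; have := walks_inv hD n.
  by rewrite !tupdE1 !(tupdE2 _ _ hi).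
- move=> n; have := walks_inv hA n.
  by rewrite !tupdE1 !(tupdE2 _ _ hi).
Qed.

Lemma sep_transfer' (t : 'I_k -> vert G) (u : 'I_k -> vert H) s s' :
  t i0 = s -> t i1 = s -> u i0 = s' -> u i1 = s' -> Rel t u ->
  forall a b, a != s -> b != s -> ~~ conn_in (~: [set s]) a b ->
  exists a' b', [/\ a' != s', b' != s' & ~~ conn_in (~: [set s']) a' b'].
Proof.
move=> e0 e1 e0' e1' hR; have := @sep_transfer t u; rewrite e0 e1 e0' e1'.
by move=> h; apply: h.
Qed.

Lemma reach_transfer' (t : 'I_k -> vert G) (u : 'I_k -> vert H) s v s' w :
  t i0 = s -> t i1 = v -> u i0 = s' -> u i1 = w -> Rel t u -> s != v ->
  forall y, y != s -> conn_in (~: [set s]) v y ->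
  exists y', Rel (tupd t i0 y) (tupd u i0 y') /\ conn_in (~: [set s']) w y'.
Proof.
move=> e0 e1 e0' e1' hR; have := @reach_transfer t u hR; rewrite e0 e1 e0' e1'.
by move=> h hsv y hy hc; apply: h.
Qed.

Lemma diag' (t : 'I_k -> vert G) (u : 'I_k -> vert H) s s' :
  t i0 = s -> u i0 = s' -> Rel t u -> Rel (tupd t i1 s) (tupd u i1 s').
Proof. by move=> e0 e0' hR; have := diag_rel hR; rewrite e0 e0'. Qed.

End Tup.

Section Struct.
Variables (C : Type) (G : cgraph C).
Local Notation V := (vert G).

Lemma conn_sym (A : {set V}) x y : conn_in A x y = conn_in A y x.
Proof.
have hs : symmetric [rel a b : V | adj a b && (a \in A) && (b \in A)].
  move=> a b /=.
  by rewrite (adj_sym (c:=G)); case: (adj b a); case: (a \in A); case: (b \in A).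
exact: (sym_connect_sym hs x y).
Qed.

Lemma conn_trans (A : {set V}) x y z : conn_in A x y -> conn_in A y z -> conn_in A x z.
Proof. exact: connect_trans. Qed.

Lemma conn_edge (A : {set V}) x y : adj x y -> x \in A -> y \in A -> conn_in A x y.
Proof. by move=> h1 h2 h3; apply: connect1; rewrite /= h1 h2 h3. Qed.

Lemma conn_sub (A B : {set V}) x y : conn_in A x y -> x \in B ->
  (forall z, z \in A -> conn_in A x z -> z \in B) -> conn_in B x y.
Proof.
move=> /connectP [p hp ->] {y} hxB hz.
suff : forall a, conn_in A x a -> conn_in B x a ->
    path [rel a b : V | adj a b && (a \in A) && (b \in A)] a p -> conn_in B x (last a p).
  by apply; [apply: connect0 | apply: connect0 | exact: hp].
clear hp; elim: p => [|z p IH] a hAa hBa /=; first by [].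
case/andP => /andP [/andP [hadj haA] hzA] hp.
have hAz : conn_in A x z by apply: conn_trans hAa (conn_edge hadj haA hzA).
have hzB := hz z hzA hAz.
have haB := hz a haA hAa.
apply: (IH z hAz _ hp).
exact: conn_trans hBa (conn_edge hadj haB hzB).
Qed.

Lemma exit_nb (c a : V) : conn_in setT a c -> a != c ->
  exists u, adj u c /\ conn_in (~: [set c]) a u.
Proof.
move=> /connectP [p hp ->].
elim: p a hp => [|z p IH] a /=; first by rewrite eqxx.
case/andP => /andP [/andP [hadj _] _] hp nac.
case: (eqVneq z (last z p)) => [ez|nz].
  by exists a; split; [rewrite -ez|apply: connect0].
have [u [hu hcu]] := IH z hp nz.
exists u; split => //.
apply: conn_trans hcu; apply: conn_edge => //; rewrite !inE //.
Qed.

Lemma conn_not_s (s x y : V) : x != s -> conn_in (~: [set s]) x y -> y != s.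
Proof.
move=> nxs /(conn_WA nxs) [n hn]; apply/eqP => eys.
by move: hn; rewrite eys WA_end.
Qed.

Hypothesis cG : connected_graph G.

Lemma sep0 : ~ separator (set0 : {set V}).
Proof.
case=> x [y [_ _]]; rewrite setC0.
by case: cG => _ ->.
Qed.

Lemma sep_card (S : {set V}) : separator S -> 0 < #|S|.
Proof.
move=> hS; rewrite card_gt0; apply/eqP => e; apply: sep0; by rewrite -e.
Qed.

Lemma single_min (x : V) : separator [set x] -> min_separator [set x].
Proof. by move=> h; split => // S' hS'; rewrite cards1 sep_card. Qed.

Lemma min_sep_single (S : {set V}) (x : V) : min_separator S -> separator [set x] ->
  exists s, S = [set s].
Proof.
case=> hS hmin hx; apply/cards1P; rewrite eqn_leq sep_card // andbT.
by have := hmin _ hx; rewrite cards1.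
Qed.

Lemma notwo_sep (S : {set V}) : ~ two_connected G -> separator S ->
  exists x : V, separator [set x].
Proof.
move=> n2 hS.
have [z hzS] : exists z, z \in S by apply/set0Pn; rewrite -card_gt0 sep_card.
have h2 : 2 < #|V|.
  case: hS => a [b [haS hbS hab]].
  have nab : a != b by apply: contraNneq hab => ->; apply: connect0.
  have : [set a; b] \proper [set: V].
    rewrite properT; apply/eqP => e.
    have : z \in [set a; b] by rewrite e inE.
    rewrite !inE => /orP [/eqP e1|/eqP e1]; by move: hzS; rewrite e1 ?(negbTE haS) ?(negbTE hbS).
  by move/proper_card; rewrite cards2 nab cardsT.
apply: NNPP => hne; apply: n2; split => // x y z0 hy hz.
apply: NNPP => hc; apply: hne; exists x; exists y, z0.
by rewrite !inE hy hz; split => //; apply/negP.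
Qed.

Lemma leaf_nocut (s : V) (K : {set V}) : inP0 [set s] K -> forall c, c \in K -> ~ separator [set c].
Proof.
case=> [[hminS [x0 hx0 eK]] hmin] c hcK hc.
have hsc : c != s by move: hcK; rewrite eK !inE => /andP [].
have hx0c : conn_in (~: [set s]) x0 c by move: hcK; rewrite eK !inE => /andP [].
have [a [haS hna]] : exists a, a \notin [set c] /\ ~~ conn_in (~: [set c]) a s.
  case: hc => a [b [ha hb hab]].
  case: (boolP (conn_in (~: [set c]) a s)) => has; last by exists a.
  case: (boolP (conn_in (~: [set c]) b s)) => hbs; last by exists b.
  by move: hab; rewrite (conn_trans has) // conn_sym.
set K2 := [set y | (y \notin [set c]) && conn_in (~: [set c]) a y].
have hP2 : inP [set c] K2.
  split.
    apply: single_min; exists a, s; split => //; rewrite inE; by rewrite eq_sym.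
  by exists a.
have hac : a != c by move: haS; rewrite inE.
have [u [huc hau]] := exit_nb (proj2 cG a c) hac.
have hus : u != s.
  apply: contraNneq hna => <-; exact: hau.
have hsub : K2 \subset K.
  apply/subsetP => y; rewrite !inE => /andP [hyc hay].
  have hys : y != s by apply: contraNneq hna => <-.
  rewrite eK !inE hys /=.
  apply: (conn_trans hx0c); apply: (@conn_trans _ _ u).
    by apply: conn_edge; rewrite ?inE 1?(adj_sym (c:=G)).
  apply: (conn_sub (A := ~: [set c])).
  - by apply: conn_trans hay; rewrite conn_sym.
  - by rewrite !inE.
  - move=> z _ hz; rewrite !inE; apply: contraNneq hna => <-.
    exact: conn_trans hau hz.
have := hmin _ _ hP2 hsub => /subsetP /(_ c hcK).
by rewrite !inE eqxx.
Qed.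

Lemma inner_cut (s v s2 : V) (K2 : {set V}) :
  inP [set s2] K2 ->
  K2 \subset [set y | (y \notin [set s]) && conn_in (~: [set s]) v y] ->
  ~ ([set y | (y \notin [set s]) && conn_in (~: [set s]) v y] \subset K2) ->
  s2 != s /\ conn_in (~: [set s]) v s2.
Proof.
case=> _ [x2 hx2 eK2] hsub hnsub.
have hx2K : x2 \in [set y | (y \notin [set s]) && conn_in (~: [set s]) v y].
  by apply: (subsetP hsub); rewrite eK2 in_set hx2 /=; apply: connect0.
move: (hx2K); rewrite !inE => /andP [hx2s hvx2].
case: (boolP ((s2 \notin [set s]) && conn_in (~: [set s]) v s2)).
  by rewrite inE => /andP [].
move=> hs2; exfalso; apply: hnsub; apply/subsetP => y.
rewrite !inE => /andP [hys hvy].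
have hy2 : y != s2 by apply: contraNneq hs2 => <-; rewrite inE hys.
rewrite eK2 !inE hy2 /=.
apply: (conn_sub (A := ~: [set s])).
- by apply: conn_trans hvy; rewrite conn_sym.
- by rewrite inE.
- move=> z hzA hz; rewrite !inE; apply: contraNneq hs2 => <-.
  by rewrite -in_setC hzA /=; apply: conn_trans hvx2 hz.
Qed.

End Struct.
Unset Implicit Arguments.

Theorem lemma8 (C : Type) (k : nat) (G H : cgraph C) (v : vert G) (w : vert H) :
  2 <= k ->
  connected_graph G -> ~ two_connected G ->
  connected_graph H -> ~ two_connected H ->
  in_perp v -> ~ in_perp w ->
  ~ wl_color_eq k G H v w.
Proof.
move=> hk cG n2G cH n2H pv npw hwl.
have h0 : 0 < k by apply: leq_trans hk.
pose i0 := Ordinal h0; pose i1 := Ordinal hk.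
have hi : i0 != i1 by [].
have hi' : i1 != i0 by [].
have [S' [K' [hP0 hwK]]] : exists S' K', inP0 S' K' /\ w \in K'.
  apply: NNPP => hne; apply: npw => S K hP; apply/negP => hw; apply: hne; by exists S, K.
have hP0' := hP0; case: hP0 => [[hminS' hcompK'] _].
have [x1 hx1] := notwo_sep cH n2H (proj1 hminS').
have [s' eS'] := min_sep_single cH hminS' hx1.
subst S'.
have hsepS' := proj1 hminS'.
case: hcompK' => x0 hx0 eK'.
have [hws' hx0w] : w != s' /\ conn_in (~: [set s']) x0 w.
  by move: hwK; rewrite eK' !inE => /andP [].
have R0 : Rel (fun _ : 'I_k => v) (fun _ : 'I_k => w) := hwl.
have [f0 [[g0 fg0 gf0] hf0]] := GL R0.
have R1 := hf0 (g0 s') i0; rewrite gf0 in R1.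
set s := g0 s' in R1.
set T1 := tupd (fun _ : 'I_k => v) i0 s in R1.
set U1 := tupd (fun _ : 'I_k => w) i0 s' in R1.
have e10 : T1 i0 = s by rewrite /T1 tupdE1.
have e11 : T1 i1 = v by rewrite /T1 (tupdE2 _ _ hi').
have e10' : U1 i0 = s' by rewrite /U1 tupdE1.
have e11' : U1 i1 = w by rewrite /U1 (tupdE2 _ _ hi').
have hsv : s != v.
  by have := neq_transfer i0 i1 R1; rewrite e10 e11 e10' e11' (eq_sym s') hws' => ->.
have D1 := diag' hi e10 e10' R1.
have hsepS : separator [set s].
  case: hsepS' => a' [b' [ha' hb' hab']].
  have q1 : tupd U1 i1 s' i0 = s' by rewrite (tupdE2 _ _ hi) e10'.
  have q2 : tupd U1 i1 s' i1 = s' by rewrite tupdE1.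
  have q3 : tupd T1 i1 s i0 = s by rewrite (tupdE2 _ _ hi) e10.
  have q4 : tupd T1 i1 s i1 = s by rewrite tupdE1.
  rewrite !inE in ha' hb'.
  have [a [b [ha hb hab]]] := sep_transfer' hi q1 q2 q3 q4 (Rel_sym D1) ha' hb' hab'.
  by exists a, b; rewrite !inE.
set K := [set y | (y \notin [set s]) && conn_in (~: [set s]) v y].
have hPK : inP [set s] K.
  split; first exact: single_min.
  by exists v => //; rewrite inE eq_sym.
have hvK : v \in K by rewrite !inE (eq_sym v) hsv /=; apply: connect0.
have hnP0 : ~ inP0 [set s] K by move=> h; move: (pv _ _ h); rewrite hvK.
have [S2 [K2 [hP2 [hsub hnsub]]]] :
    exists S2 K2, [/\ inP S2 K2, K2 \subset K & ~ (K \subset K2)].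
  apply: NNPP => hne; apply: hnP0; split => // S2 K2 hP2 hsub.
  apply: NNPP => hn; apply: hne; by exists S2, K2.
have [s2 eS2] := min_sep_single cG (proj1 hP2) hsepS.
subst S2.
have [hs2s hvs2] := inner_cut hP2 hsub hnsub.
have [y' [R2 hwy']] := reach_transfer' hi e10 e11 e10' e11' R1 hsv hs2s hvs2.
have hy's' : y' != s' := conn_not_s hws' hwy'.
have hy'K' : y' \in K'.
  by rewrite eK' !inE hy's' /=; apply: conn_trans hx0w hwy'.
have D2 := diag' hi (tupdE1 _ _ _) (tupdE1 _ _ _) R2.
apply: (leaf_nocut cH hP0' hy'K').
case: (proj1 (proj1 hP2)) => a [b [ha hb hab]].
rewrite !inE in ha hb.
have q1 : tupd (tupd T1 i0 s2) i1 s2 i0 = s2 by rewrite (tupdE2 _ _ hi) tupdE1.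
have q2 : tupd (tupd T1 i0 s2) i1 s2 i1 = s2 by rewrite tupdE1.
have q3 : tupd (tupd U1 i0 y') i1 y' i0 = y' by rewrite (tupdE2 _ _ hi) tupdE1.
have q4 : tupd (tupd U1 i0 y') i1 y' i1 = y' by rewrite tupdE1.
have [a' [b' [ha' hb' hab']]] := sep_transfer' hi q1 q2 q3 q4 D2 ha hb hab.
by exists a', b'; rewrite !inE.
Qed.
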